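(* Let $T$ be an ultrametric tree of radius $1$, let $U$ be a nonempty upper subtree of $T$, and let $M$ be the set of minimal elements of $U$. For each $i\in M$ let $n_i$ be the number of leaves of $T$ that are descendants of $i$ (counting $i$ itself if it is a leaf), and set $n=\sum_{i\in M}n_i$. Then the symmetric matrix $A^{T,U}$ with rows and columns indexed by $M$ and entries \[ A^{T,U}_{ij}=\begin{cases}\big(1-\tfrac1n\big)-H(i\vee j), & i\ne j,\\[2pt] \big(1-\tfrac1n\big)-\big(1-\tfrac1{n_i}\big)H(i), & i=j,\end{cases} \] is positive semidefinite.
   Context: An ultrametric tree is a rooted tree with nonnegative edge lengths such that all leaves have the same distance (sum of edge lengths along the path) from the root; this common distance is the radius. The height $H(v)$ of a vertex $v$ is the distance from $v$ to its furthest descendant (equivalently, to any leaf below it). For distinct vertices $i,j$, $i\vee j$ denotes their lowest common ancestor, the unique vertex lying on all three paths connecting the root, $i$ and $j$. Regard $T$ as a poset with the root as maximum (ancestors above descendants); an upper subtree is a set $U$ of vertices such that every ancestor of a vertex of $U$ lies in $U$, and its minimal elements are the vertices of $U$ none of whose children lie in $U$. *)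

(* Defs.v *)
From HB Require Import structures.
From mathcomp Require Import all_boot all_order all_algebra.
Set Implicit Arguments. Unset Strict Implicit. Unset Printing Implicit Defensive.
Import Order.TTheory GRing.Theory Num.Theory.
Local Open Scope ring_scope.

(* A finite rooted tree on the vertex type V is given by a root and a parent
   map [par] (with [par root = root]); [len v] is the length of the edge
   from v to its parent (irrelevant for v = root). *)

(* u is an ancestor of v (u >= v in the tree poset; reflexive). *)
Definition anc (V : finType) (par : V -> V) (u v : V) : bool :=
  [exists k : 'I_#|V|.+1, iter k par v == u].

Definition is_rooted_tree (V : finType) (root : V) (par : V -> V) : Prop :=
  par root = root /\ forall v, anc par root v.

Definition child (V : finType) (root : V) (par : V -> V) (w v : V) : bool :=
  (par w == v) && (w != root).

Definition leaf (V : finType) (root : V) (par : V -> V) (v : V) : bool :=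
  [forall w, ~~ child root par w v].

Definition depth (R : realFieldType) (V : finType) (root : V) (par : V -> V)
  (len : V -> R) (v : V) : R :=
  \sum_(k < #|V|) (if iter k par v == root then 0 else len (iter k par v)).

Definition height (R : realFieldType) (V : finType) (root : V) (par : V -> V)
  (len : V -> R) (v : V) : R :=
  \big[Num.max/0]_(w | anc par v w) (depth root par len w - depth root par len v).

Definition lca (V : finType) (root : V) (par : V -> V) (i j : V) : V :=
  odflt root [pick w | anc par w i && anc par w j &&
     [forall w', (anc par w' i && anc par w' j) ==> anc par w' w]].

Definition ultrametric_radius1 (R : realFieldType) (V : finType) (root : V)
  (par : V -> V) (len : V -> R) : Prop :=
  is_rooted_tree root par /\ (forall v, 0 <= len v) /\
  (forall l, leaf root par l -> depth root par len l = 1).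

Definition upper_subtree (V : finType) (par : V -> V) (U : {set V}) : Prop :=
  forall u v, v \in U -> anc par u v -> u \in U.

Definition minimal_elems (V : finType) (root : V) (par : V -> V) (U : {set V})
  : {set V} :=
  [set v in U | [forall w, child root par w v ==> (w \notin U)]].

Definition nleaves (V : finType) (root : V) (par : V -> V) (i : V) : nat :=
  #|[set l | leaf root par l && anc par i l]|.

Definition ntot (V : finType) (root : V) (par : V -> V) (U : {set V}) : nat :=
  \sum_(i in minimal_elems root par U) nleaves root par i.

Definition ATU_entry (R : realFieldType) (V : finType) (root : V)
  (par : V -> V) (len : V -> R) (U : {set V}) (i j : V) : R :=
  let n := (ntot root par U)%:R in
  if i == j then (1 - n^-1) - (1 - ((nleaves root par i)%:R)^-1) * height root par len i
  else (1 - n^-1) - height root par len (lca root par i j).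

Definition ATU (R : realFieldType) (V : finType) (root : V)
  (par : V -> V) (len : V -> R) (U : {set V}) :
  'M[R]_#|minimal_elems root par U| :=
  \matrix_(a, b) ATU_entry root par len U (enum_val a) (enum_val b).

Definition psd (R : realFieldType) (m : nat) (A : 'M[R]_m) : Prop :=
  forall x : 'cV[R]_m, 0 <= (x^T *m A *m x) 0 0.

(* Main.v *)
Require Import Defs.
From mathcomp Require Import all_boot all_order all_algebra.
Set Implicit Arguments. Unset Strict Implicit. Unset Printing Implicit Defensive.
Import Order.TTheory GRing.Theory Num.Theory.
From mathcomp Require Import ring lra.
Section Tree.
Variables (V : finType) (root : V) (par : V -> V).
Hypothesis tree : is_rooted_tree root par.

Lemma iter_root k : iter k par root = root.
Proof. by apply: iter_fix; case: tree. Qed.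

Lemma iter_big k v : (#|V| <= k)%N -> iter k par v = root.
Proof.
move=> hk; case: tree => _ /(_ v) /existsP [j /eqP hj].
have jle : (j <= k)%N by apply: leq_trans hk; rewrite -ltnS.
by rewrite -(subnK jle) iterD hj iter_root.
Qed.

Lemma ancP u v : reflect (exists k, iter k par v = u) (anc par u v).
Proof.
apply: (iffP existsP) => [[k /eqP hk]|[k hk]]; first by exists k.
have [klt|kge] := ltnP k #|V|.+1.
  by exists (Ordinal klt); rewrite hk.
case: tree => _ /(_ v) /existsP [j hj]; exists j.
by rewrite -hk (iter_big _ (ltnW kge)).
Qed.

Lemma anc_refl v : anc par v v.
Proof. by apply/ancP; exists 0%N. Qed.

Lemma anc_trans u v w : anc par u v -> anc par v w -> anc par u w.
Proof.
move=> /ancP [k1 h1] /ancP [k2 h2]; apply/ancP; exists (k1 + k2)%N.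
by rewrite iterD h2 h1.
Qed.

Lemma anc_root e : anc par e root -> e = root.
Proof. by move=> /ancP [k <-]; rewrite iter_root. Qed.

Lemma anc_par v : anc par (par v) v.
Proof. by apply/ancP; exists 1%N. Qed.

Lemma ancS e v : anc par e v = (e == v) || anc par e (par v).
Proof.
apply/idP/idP.
  move=> /ancP [[|k] hk]; first by rewrite -hk eqxx.
  by apply/orP; right; apply/ancP; exists k; rewrite -iterSr.
case/orP => [/eqP -> |]; first exact: anc_refl.
move=> h; exact: anc_trans h (anc_par v).
Qed.

Lemma acyc v : v != root -> ~~ anc par v (par v).
Proof.
move=> vr; apply/negP => /ancP [k hk].
have hk' : iter k.+1 par v = v by rewrite iterSr.
have hm : forall m, iter (m * k.+1) par v = v.
  elim=> [|m ih] //; by rewrite mulSn iterD ih hk'.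
move: (hm #|V|); rewrite iter_big; first by move=> h; rewrite h eqxx in vr.
by rewrite leq_pmulr.
Qed.

Lemma leaf_exists v : exists l, leaf root par l && anc par v l.
Proof.
have [n hn] : exists n, (#|[set w | anc par v w]| <= n)%N by exists #|[set w | anc par v w]|.
elim: n v hn => [|n ih] v hn.
  have : (0 < #|[set w | anc par v w]|)%N by apply/card_gt0P; exists v; rewrite inE anc_refl.
  by rewrite leqn0 in hn; rewrite (eqP hn).
have [lv|] := boolP (leaf root par v); first by exists v; rewrite lv anc_refl.
move=> /forallPn [w]; rewrite negbK => /andP [/eqP pw wr].
have : exists l, leaf root par l && anc par w l.
  apply: ih; rewrite -ltnS; apply: leq_trans hn; apply: proper_card.
  apply/properP; split.
    apply/subsetP => u; rewrite !inE => hu; apply: anc_trans hu.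
    by rewrite -pw anc_par.
  exists v; first by rewrite inE anc_refl.
  by rewrite inE; move: (acyc wr); rewrite pw.
move=> [l /andP [ll wl]]; exists l; rewrite ll /=; apply: anc_trans wl.
by rewrite -pw anc_par.
Qed.


Lemma lcaP i j e : anc par e (lca root par i j) = anc par e i && anc par e j.
Proof.
have ex : exists k, anc par (iter k par i) j.
  by exists #|V|; rewrite iter_big //; case: tree => _; apply.
pose k0 := ex_minn ex.
have [w hw] : exists w, anc par w i && anc par w j &&
     [forall w', (anc par w' i && anc par w' j) ==> anc par w' w].
  exists (iter k0 par i); rewrite /k0; case: ex_minnP => k hk hmin.
  rewrite hk andbT; apply/andP; split; first by apply/ancP; exists k.
  apply/forallP => w'; apply/implyP => /andP [/ancP [k' hk'] hj].
  have kk : (k <= k')%N by apply: hmin; rewrite hk'.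
  apply/ancP; exists (k' - k)%N; by rewrite -iterD subnK.
rewrite /lca; case: pickP => [w' hw'|/(_ w)]; last by rewrite hw.
move/andP: hw' => [/andP [hi hj] /forallP hall].
apply/idP/idP.
  by move=> h; rewrite (anc_trans h hi) (anc_trans h hj).
by move=> h; exact: (implyP (hall e) h).
Qed.

Lemma nleaves_pos v : (0 < nleaves root par v)%N.
Proof.
have [l hl] := leaf_exists v.
by apply/card_gt0P; exists l; rewrite inE.
Qed.

Local Open Scope ring_scope.
Variables (R : realFieldType) (len : V -> R).
Definition cw (e : V) : R := if e == root then 0 else len e.

Lemma depth_par v : depth root par len v = cw v + depth root par len (par v).
Proof.
rewrite /depth.
have : (0 < #|V|)%N by apply/card_gt0P; exists root.
case: #|V| (@iter_big) => // N' ib _.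
rewrite big_ord_recl big_ord_recr /= -iterSr (ib N'.+1) // eqxx addr0 /cw /=.
congr (_ + _); apply: eq_bigr => i _; by rewrite add0n -iterS iterSr.
Qed.

Lemma depthE v : depth root par len v = \sum_e cw e * (anc par e v)%:R.
Proof.
have : iter #|V| par v = root by apply: iter_big.
move: #|V| => k; elim: k v => [|k ih] v hv.
  rewrite /= in hv; subst v.
  rewrite /depth big1 ?big1 // => [e _|i _].
    by case: (boolP (anc par e root)) => [/anc_root ->|_]; rewrite ?mulr0 // /cw eqxx mul0r.
  by rewrite iter_root eqxx.
have [->|vr] := eqVneq v root.
  rewrite /depth big1 ?big1 // => [e _|i _].
    by case: (boolP (anc par e root)) => [/anc_root ->|_]; rewrite ?mulr0 // /cw eqxx mul0r.
  by rewrite iter_root eqxx.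
rewrite depth_par ih; last by rewrite -iterSr.
rewrite [RHS](bigD1 v) //= anc_refl mulr1 [X in _ = _ + X](eq_bigr (fun e => cw e * (anc par e (par v))%:R)).
  congr (_ + _); rewrite [LHS](bigD1 v) //= (negbTE (acyc vr)) mulr0 add0r //.
by move=> e ev; rewrite ancS (negbTE ev).
Qed.

Hypothesis len0 : forall v, 0 <= len v.
Hypothesis leaf1 : forall l, leaf root par l -> depth root par len l = 1.

Lemma cw_ge0 e : 0 <= cw e.
Proof. by rewrite /cw; case: ifP. Qed.

Lemma depth_mono w l : anc par w l -> depth root par len w <= depth root par len l.
Proof.
move=> wl; rewrite !depthE; apply: ler_sum => e _.
apply: ler_wpM2l; first exact: cw_ge0.
case: (boolP (anc par e w)) => h; last by rewrite ler0n.
by rewrite (anc_trans h wl).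
Qed.

Lemma depth_le1 w : depth root par len w <= 1.
Proof.
have [l /andP [ll wl]] := leaf_exists w.
by rewrite -(leaf1 ll); apply: depth_mono.
Qed.

Lemma heightE v : height root par len v = 1 - depth root par len v.
Proof.
apply/le_anti/andP; split.
  apply: bigmax_le; first by rewrite subr_ge0 depth_le1.
  by move=> w _; rewrite lerD2r depth_le1.
have [l /andP [ll wl]] := leaf_exists v.
rewrite -(leaf1 ll).
exact: (le_bigmax_cond _ (fun w => depth root par len w - depth root par len v) wl).
Qed.

End Tree.
Local Open Scope ring_scope.
Lemma key (R : realFieldType) (m : nat) (E : finType) (c : E -> R)
  (inc : E -> 'I_m -> bool) (h : 'I_m -> R) (nn : 'I_m -> nat) (n : nat)
  (A : 'M[R]_m) :
  (forall e, 0 <= c e) -> (forall a, 0 <= h a) -> (forall a, (0 < nn a)%N) ->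
  n = (\sum_a nn a)%N ->
  (forall a, \sum_e c e * (inc e a)%:R + h a = 1) ->
  (forall a b, A a b = \sum_e c e * (inc e a)%:R * (inc e b)%:R - n%:R^-1
      + (if a == b then h a / (nn a)%:R else 0)) ->
  forall x : 'cV[R]_m, 0 <= (x^T *m A *m x) 0 0.
Proof.
move=> c0 h0 nn0 nE D1 AE x.
set y := fun a => x a 0.
set s := fun e => \sum_a (inc e a)%:R * y a.
set S := \sum_a y a.
set b := fun e => \sum_a (inc e a)%:R * (nn a)%:R : R.
have -> : (x^T *m A *m x) 0 0 =
   \sum_e c e * s e ^+ 2 + \sum_a h a / (nn a)%:R * y a ^+ 2 - n%:R^-1 * S ^+ 2.
  rewrite mxE.
  under eq_bigr => j _ do rewrite mxE big_distrl /=.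
  under eq_bigr => j _ do under eq_bigr => i _ do rewrite mxE AE.
  rewrite /S /s expr2 big_distrl /=.
  under [in RHS]eq_bigr => e _ do rewrite expr2 big_distrl /= big_distrr /=.
  rewrite exchange_big /=.
  under eq_bigr => j _ do under eq_bigr => i _ do rewrite mulrDr mulrBr !mulrDl.
  under eq_bigr => j _ do rewrite !big_split /=.
  rewrite !big_split /=.
  have E1 : \sum_(j < m) \sum_(i < m) x j 0 * (\sum_e c e * (inc e j)%:R * (inc e i)%:R) * x i 0 =
     \sum_e \sum_(i < m) c e * ((inc e i)%:R * y i * \sum_(a < m) (inc e a)%:R * y a).
    under eq_bigr => j _ do under eq_bigr => i _ do rewrite mulr_sumr mulr_suml.
    under eq_bigr => j _ do rewrite exchange_big /=.
    rewrite exchange_big /=.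
    apply: eq_bigr => e _; apply: eq_bigr => j _.
    rewrite mulr_sumr mulr_sumr; apply: eq_bigr => i _.
    rewrite /y; ring.
  have E2 : \sum_(j < m) \sum_(i < m) - (x j 0 / n%:R) * x i 0 =
     - (n%:R^-1 * \sum_(i < m) y i * \sum_(a < m) y a).
    rewrite [n%:R^-1 * _]mulr_sumr -sumrN; apply: eq_bigr => j _.
    rewrite mulr_sumr mulr_sumr -sumrN; apply: eq_bigr => i _; rewrite /y; ring.
  have E3 : \sum_(j < m) \sum_(i < m) x j 0 * (if j == i then h j / (nn j)%:R else 0) * x i 0 =
     \sum_(a < m) h a / (nn a)%:R * y a ^+ 2.
    apply: eq_bigr => j _.
    rewrite (bigD1 j) //= eqxx big1 ?addr0; first by rewrite /y; ring.
    by move=> i /negbTE; rewrite eq_sym => ->; rewrite mulr0 mul0r.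
  rewrite E1 E2 E3; ring.
have key1 : forall t : R, \sum_e c e * s e ^+ 2 + \sum_a h a / (nn a)%:R * y a ^+ 2
     >= 2 * t * S - t ^+ 2 * n%:R.
  move=> t.
  have SE : S = \sum_e c e * s e + \sum_a h a * y a.
    rewrite /s.
    under eq_bigr => e _ do rewrite big_distrr /=.
    rewrite exchange_big -big_split /=.
    apply: eq_bigr => a _.
    transitivity ((\sum_e c e * (inc e a)%:R + h a) * y a); first by rewrite D1 mul1r.
    rewrite mulrDl big_distrl /=; congr (_ + _).
    by apply: eq_bigr => e _; rewrite mulrA.
  have nE' : n%:R = \sum_e c e * b e + \sum_a h a * (nn a)%:R :> R.
    rewrite /b.
    under eq_bigr => e _ do rewrite big_distrr /=.
    rewrite exchange_big -big_split /= nE natr_sum.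
    apply: eq_bigr => a _.
    transitivity ((\sum_e c e * (inc e a)%:R + h a) * (nn a)%:R); first by rewrite D1 mul1r.
    rewrite mulrDl big_distrl /=; congr (_ + _).
    by apply: eq_bigr => e _; rewrite mulrA.
  rewrite SE nE'.
  have -> : 2 * t * (\sum_e c e * s e + \sum_a h a * y a) -
   t ^+ 2 * (\sum_e c e * b e + \sum_a h a * (nn a)%:R) =
   \sum_e (2 * t * (c e * s e) - t ^+ 2 * (c e * b e)) +
   \sum_a (2 * t * (h a * y a) - t ^+ 2 * (h a * (nn a)%:R)).
    rewrite !sumrB -!mulr_sumr; ring.
  apply: lerD; apply: ler_sum.
    move=> e _.
    have [allz|] := boolP [forall a, ~~ inc e a].
      have s0 : s e = 0.
        by rewrite /s big1 // => a _; move/forallP: allz => /(_ a) /negbTE ->; rewrite mul0r.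
      have b0 : 0 <= b e by rewrite /b sumr_ge0 // => a _; rewrite mulr_ge0.
      rewrite s0 !mulr0 expr0n /= mulr0 sub0r oppr_le0.
      by apply: mulr_ge0; [exact: sqr_ge0 | exact: mulr_ge0].
    move/forallPn => [a0]; rewrite negbK => ia0.
    have b1 : 1 <= b e.
      rewrite /b (bigD1 a0) //= ia0 mul1r.
      have : 0 <= \sum_(i < m | i != a0) (inc e i)%:R * (nn i)%:R :> R.
        by rewrite sumr_ge0 // => a _; rewrite mulr_ge0.
      have : 1 <= (nn a0)%:R :> R by rewrite ler1n nn0.
      lra.
    have q0 : 0 <= s e ^+ 2 - 2 * t * s e + t ^+ 2 * b e.
      have := sqr_ge0 (s e - t); have := sqr_ge0 t; nra.
    rewrite -subr_ge0.
    have -> : c e * s e ^+ 2 - (2 * t * (c e * s e) - t ^+ 2 * (c e * b e)) =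
       c e * (s e ^+ 2 - 2 * t * s e + t ^+ 2 * b e) by ring.
    exact: mulr_ge0.
  move=> a _.
  have np : 0 < (nn a)%:R :> R by rewrite ltr0n nn0.
  rewrite -subr_ge0.
  have -> : h a / (nn a)%:R * y a ^+ 2 - (2 * t * (h a * y a) - t ^+ 2 * (h a * (nn a)%:R))
     = h a / (nn a)%:R * (y a - t * (nn a)%:R) ^+ 2.
    by field; rewrite gt_eqF.
  by rewrite mulr_ge0 ?sqr_ge0 // divr_ge0 // ltW.
rewrite subr_ge0.
have [->|nz] := eqVneq n 0%N.
  rewrite invr0 mul0r; have := key1 0; by rewrite !mulr0 expr0n /= !mul0r subrr.
have np : 0 < n%:R :> R by rewrite ltr0n lt0n.
apply: le_trans (key1 (S / n%:R)).
rewrite le_eqVlt; apply/orP; left; apply/eqP; field; by rewrite gt_eqF.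
Qed.

Theorem proposition2p2 (R : realFieldType) (V : finType) (root : V)
  (par : V -> V) (len : V -> R) (U : {set V}) :
  ultrametric_radius1 root par len ->
  U != set0 -> upper_subtree par U ->
  psd (ATU root par len U).
Proof.
move=> [tree [len0 leaf1]] _ _ x.
pose M := minimal_elems root par U.
apply: (@key R #|M| V (cw root len) (fun e a => anc par e (enum_val a))
   (fun a => height root par len (enum_val a))
   (fun a => nleaves root par (enum_val a)) (ntot root par U)).
- exact: cw_ge0.
- by move=> a; rewrite heightE // subr_ge0 depth_le1.
- by move=> a; apply: nleaves_pos.
- by rewrite /ntot big_enum_val.
- by move=> a; rewrite heightE // -depthE // addrC subrK.
have DE : forall v, \sum_e cw root len e * (anc par e v)%:R = depth root par len v.
  by move=> v; rewrite (depthE tree len v).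
move=> a b; rewrite mxE /ATU_entry (inj_eq enum_val_inj).
have [<-|ab] := eqVneq a b.
  rewrite (eq_bigr (fun e => cw root len e * (anc par e (enum_val a))%:R)); last first.
    by move=> e _; case: (anc par e (enum_val a)); rewrite ?mulr1 ?mulr0.
  rewrite DE heightE //; ring.
rewrite (eq_bigr (fun e => cw root len e * (anc par e (lca root par (enum_val a) (enum_val b)))%:R)); last first.
  move=> e _; rewrite lcaP //.
  by case: (anc par e (enum_val a)); case: (anc par e (enum_val b)); rewrite ?mulr1 ?mulr0.
rewrite DE heightE //; ring.
Qed.
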